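(* Let $f:\mathbb{R}^n\to\mathbb{R}$ be differentiable with $L$-Lipschitz gradient $\nabla f$. Let $\mathcal{E}^t$ denote the event $\|\nabla f(x^t)\|_\infty\le\eta$. If $x\in\mathbb{R}^n$ satisfies $\frac{L\alpha}{2}\|\nabla f(x)\|_1<\|\nabla f(x)\|_2^2$, then the iterate $x^{t+1}$ of Markov gradient descent satisfies $$\mathbb{E}\left[f(x^{t+1})\,\middle|\,x^t=x,\mathcal{E}^t\right]<f(x).$$ In particular, this holds whenever $\|\nabla f(x)\|_2>\frac{L\alpha\sqrt{n}}{2}$.
   Context: Markov gradient descent (MGD) with lattice resolution $\alpha>0$ and normalizer $\eta>0$: start at $x^0\in\alpha\mathbb{Z}^n$; at step $t$, for each coordinate $i$, conditionally on $x^t$, $\Delta^t_i\in\{0,1\}$ is Bernoulli with $\mathbb{P}[\Delta^t_i=1\mid x^t]=\min(|\partial_i f(x^t)|/\eta,1)$, and $x^{t+1}_i=x^t_i-\alpha\,\mathrm{sgn}(\partial_i f(x^t))\Delta^t_i$. *)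

(* Defs.v *)
From HB Require Import structures.
From mathcomp Require Import all_boot all_order all_algebra.
From mathcomp Require Import all_classical all_reals all_analysis.
Set Implicit Arguments. Unset Strict Implicit. Unset Printing Implicit Defensive.
Import Order.TTheory GRing.Theory Num.Theory.
Import numFieldNormedType.Exports.
Local Open Scope ring_scope.

Section MGD.
Variables (R : realType) (n : nat).

Definition basis_vec (i : 'I_n) : 'rV[R]_n := delta_mx 0 i.

Definition grad (f : 'rV[R]_n -> R) (x : 'rV[R]_n) : 'rV[R]_n :=
  \row_i ('D_(basis_vec i) f x).

Definition norm1 (v : 'rV[R]_n) : R := \sum_i `|v 0 i|.
Definition norm2 (v : 'rV[R]_n) : R := Num.sqrt (\sum_i (v 0 i) ^+ 2).
Definition norminf (v : 'rV[R]_n) : R := \big[Num.max/0]_i `|v 0 i|.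

Definition lipschitz_grad (L : R) (f : 'rV[R]_n -> R) : Prop :=
  (forall x, differentiable f x) /\
  (forall x y, norm2 (grad f x - grad f y) <= L * norm2 (x - y)).

(* A possible conditional law (given x^t = x) of the coin vector
   Delta^t = (Delta^t_i)_i in {0,1}^n: a probability mass function on
   {ffun 'I_n -> bool} whose i-th marginal is Bernoulli(min(|d_i f(x)|/eta, 1)).
   (The MGD definition only prescribes these marginals.) *)
Definition mgd_coin_law (eta : R) (g : 'rV[R]_n)
    (mu : {ffun 'I_n -> bool} -> R) : Prop :=
  [/\ forall d, 0 <= mu d,
      \sum_(d : {ffun 'I_n -> bool}) mu d = 1 &
      forall i, \sum_(d : {ffun 'I_n -> bool} | d i) mu d = Num.min (`|g 0 i| / eta) 1].

(* x^{t+1} as a function of x^t = x, the gradient g = grad f x and the coins d *)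
Definition mgd_next (alpha : R) (x g : 'rV[R]_n) (d : {ffun 'I_n -> bool})
    : 'rV[R]_n :=
  x - alpha *: \row_i (Num.sg (g 0 i) * (d i)%:R).

(* E[ f(x^{t+1}) | x^t = x ] under coin law mu *)
Definition mgd_expect (alpha : R) (f : 'rV[R]_n -> R) (x : 'rV[R]_n)
    (mu : {ffun 'I_n -> bool} -> R) : R :=
  \sum_(d : {ffun 'I_n -> bool}) mu d * f (mgd_next alpha x (grad f x) d).

End MGD.

(* Main.v *)
Require Import Defs.
From HB Require Import structures.
From mathcomp Require Import all_boot all_order all_algebra.
From mathcomp Require Import all_classical all_reals all_analysis.
From mathcomp Require Import ring lra.
Import Order.TTheory GRing.Theory Num.Theory.
Import numFieldNormedType.Exports.
Local Open Scope ring_scope.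

Section Aux.
Variables (R : realType) (n : nat).

Definition dotv (u v : 'rV[R]_n) : R := \sum_i u 0 i * v 0 i.

Lemma diff_grad (f : 'rV[R]_n -> R) z v : differentiable f z ->
  'D_v f z = dotv (grad f z) v.
Proof.
move=> df; rewrite deriveE // {1}(row_sum_delta v) linear_sum /dotv.
apply: eq_bigr => i _; rewrite linearZ /= mxE -deriveE // mulrC.
by [].
Qed.

Lemma phi_derive (f : 'rV[R]_n -> R) x h t : differentiable f (x + t *: h) ->
  is_derive t (1:R) (fun s => f (x + s *: h)) (dotv (grad f (x + t*:h)) h).
Proof.
move=> df.
have E : (fun s : R => s^-1 *: (((fun s => f (x + s *: h)) \o shift t) (s *: 1) - f (x + t *: h)))
  = (fun s => s^-1 *: ((f \o shift (x + t *: h)) (s *: h) - f (x + t*:h))).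
  apply/funext => s /=; congr (_ *: (f _ - _)).
  by rewrite [s%:A]mulr1 scalerDl addrCA.
have der : derivable f (x + t*:h) h by apply: diff_derivable.
split.
- by rewrite /derivable E.
- by rewrite /derive E -diff_grad.
Qed.


Lemma CS (u v : 'I_n -> R) :
  \sum_i u i * v i <= Num.sqrt (\sum_i u i ^+ 2) * Num.sqrt (\sum_i v i ^+ 2).
Proof.
set A := \sum_i u i ^+ 2; set B := \sum_i v i ^+ 2; set S := \sum_i _.
have A0 : 0 <= A by apply: sumr_ge0 => i _; exact: sqr_ge0.
have B0 : 0 <= B by apply: sumr_ge0 => i _; exact: sqr_ge0.
set a := Num.sqrt A; set b := Num.sqrt B.
have aA : a ^+ 2 = A by rewrite sqr_sqrtr.
have bB : b ^+ 2 = B by rewrite sqr_sqrtr.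
have a0 : 0 <= a by exact: sqrtr_ge0.
have b0 : 0 <= b by exact: sqrtr_ge0.
have key : 2 * a * b * S <= 2 * (a ^+ 2 * b ^+ 2).
  rewrite /S mulr_sumr.
  have -> : 2 * (a ^+ 2 * b ^+ 2) = \sum_i (b ^+ 2 * u i ^+ 2 + a ^+ 2 * v i ^+ 2).
    rewrite big_split /= -!mulr_sumr -/A -/B -aA -bB; ring.
  apply: ler_sum => i _.
  have := sqr_ge0 (b * u i - a * v i); nra.
have [a0'|ap] := eqVneq a 0.
  have X0 : A <= 0 by rewrite -sqrtr_eq0 -/a a0'.
  have XX : A = 0 by apply/eqP; rewrite eq_le X0 A0.
  have H := psumr_eq0P (fun i _ => sqr_ge0 (u i)) XX.
  rewrite /S big1 ?a0' ?mul0r // => i _.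
  by have /eqP := H i isT; rewrite sqrf_eq0 => /eqP ->; rewrite mul0r.
have [b0'|bp] := eqVneq b 0.
  have X0 : B <= 0 by rewrite -sqrtr_eq0 -/b b0'.
  have XX : B = 0 by apply/eqP; rewrite eq_le X0 B0.
  have H := psumr_eq0P (fun i _ => sqr_ge0 (v i)) XX.
  rewrite /S big1 ?b0' ?mulr0 // => i _.
  by have /eqP := H i isT; rewrite sqrf_eq0 => /eqP ->; rewrite mulr0.
have ab : 0 < a * b by rewrite mulr_gt0 // lt_def ?ap ?bp.
nra.
Qed.


Lemma norm2_scale s (h : 'rV[R]_n) : norm2 (s *: h) = `|s| * norm2 h.
Proof.
rewrite /norm2 (eq_bigr (fun i => s ^+ 2 * h 0 i ^+ 2)); last first.
  by move=> i _; rewrite mxE exprMn.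
by rewrite -mulr_sumr sqrtrM ?sqr_ge0 // sqrtr_sqr.
Qed.

Lemma descent (f : 'rV[R]_n -> R) L x h : lipschitz_grad L f ->
  f (x + h) <= f x + dotv (grad f x) h + L / 2 * \sum_i h 0 i ^+ 2.
Proof.
case=> dif lip.
set G0 := dotv (grad f x) h; set N := \sum_i h 0 i ^+ 2; set c := L / 2 * N.
pose phi := fun s : R => f (x + s *: h).
pose psi := phi - ((@id R) * cst G0 + (@id R) ^+ 2 * cst c).
have dpsi (s : R) : is_derive s (1 : R) psi (dotv (grad f (x + s *: h)) h - (G0 + 2 * s * c)).
  apply: is_derive_eq.
    apply: is_deriveB; first exact: phi_derive.
  congr (_ - _); rewrite !scaler0 !add0r /cst /= ![_%:A]mulr1 expr1.
    rewrite -[c *: _]/(c * (2 * s)); ring.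
have bnd (s : R) : 0 <= s -> dotv (grad f (x + s *: h)) h - (G0 + 2 * s * c) <= 0.
  move=> s0.
  have E : dotv (grad f (x + s *: h)) h - G0 =
      \sum_i (grad f (x + s *: h) - grad f x) 0 i * h 0 i.
    rewrite /G0 /dotv -sumrB; apply: eq_bigr => i _; rewrite !mxE; ring.
  have C := CS (fun i => (grad f (x + s *: h) - grad f x) 0 i) (fun i => h 0 i).
  have l := lip (x + s *: h) x.
  rewrite addrAC subrr add0r norm2_scale ger0_norm // in l.
  have N0 : 0 <= N by apply: sumr_ge0 => i _; exact: sqr_ge0.
  have hN : norm2 h ^+ 2 = N by rewrite /norm2 sqr_sqrtr.
  have h0 : 0 <= norm2 h by exact: sqrtr_ge0.
  rewrite -E in C.
  have l2 := ler_wpM2r h0 l.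
  rewrite /c; rewrite -hN.
  rewrite -/(norm2 _) -/(norm2 h) in C.
  nra.
have ider (s : R) : derivable psi s 1 by have := dpsi s; case.
have mono := @ler0_derive1_le_cc R psi 0 1 (fun s _ => ider s) _ _.
have : psi 1 <= psi 0.
  apply: mono.
  - move=> s; rewrite in_itv /= => /andP[s0 _].
    by rewrite derive1E derive_val; apply: bnd; rewrite ltW.
  - by apply: derivable_within_continuous => s _; exact: ider.
  - by rewrite in_itv /= ler01 lexx.
  - by rewrite in_itv /= ler01 lexx.
  - exact: ler01.
move=> H.
have H' : f (x + 1 *: h) - (1 * G0 + 1 ^+ 2 * c) <= f (x + 0 *: h) - (0 * G0 + 0 ^+ 2 * c).
  exact: H.
move: H'; rewrite scale1r scale0r addr0 expr1n mul1r mul0r expr0n /= mul0r addr0 subr0; lra.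
Qed.


Lemma expect_bound (f : 'rV[R]_n -> R) (L alpha eta : R) (x : 'rV[R]_n)
    (mu : {ffun 'I_n -> bool} -> R) :
  0 < eta -> lipschitz_grad L f -> norminf (grad f x) <= eta ->
  mgd_coin_law eta (grad f x) mu ->
  mgd_expect alpha f x mu <=
    f x - alpha / eta * (\sum_i (grad f x 0 i) ^+ 2 - L * alpha / 2 * norm1 (grad f x)).
Proof.
move=> eta0 Hl Hinf [mu0 mu1 mum].
set g := grad f x.
pose c (i : 'I_n) := - alpha * `|g 0 i| + L / 2 * alpha ^+ 2 * Num.sg (g 0 i) ^+ 2.
have step d : f (mgd_next alpha x g d) <= f x + \sum_i (d i)%:R * c i.
  have := descent f L x (-(alpha *: \row_i (Num.sg (g 0 i) * (d i)%:R))) Hl.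
  rewrite /mgd_next -/g => H; apply: (le_trans H); rewrite -addrA lerD2l.
  rewrite /dotv mulr_sumr -big_split /=; apply: ler_sum => i _.
  rewrite !mxE /c.
  have -> : 'D_(basis_vec R i) f x = g 0 i by rewrite mxE.
  case: (d i) => /=; last by rewrite !mulr0 oppr0 mulr0 expr0n /= mulr0 addr0 mul0r.
  rewrite !mulr1 mul1r (normrEsg (g 0 i)); rewrite le_eqVlt; apply/orP; left; apply/eqP; ring.
have pe i : \sum_d mu d * (d i)%:R = `|g 0 i| / eta.
  have gi : `|g 0 i| / eta <= 1.
    rewrite ler_pdivrMr // mul1r; apply: le_trans Hinf.
    rewrite /norminf -/g; exact: le_bigmax.
  rewrite -(min_l gi) -mum [RHS]big_mkcond /=; apply: eq_bigr => d _.
  by case: (d i); rewrite ?mulr1 ?mulr0.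
rewrite /mgd_expect -/g.
apply: (le_trans (y := \sum_d mu d * (f x + \sum_i (d i)%:R * c i))).
  by apply: ler_sum => d _; apply: ler_wpM2l.
under eq_bigr => d _ do rewrite mulrDr mulr_sumr.
rewrite big_split /= -mulr_suml mu1 mul1r exchange_big /=.
rewrite lerD2l.
under eq_bigr => i _ do under eq_bigr => d _ do rewrite mulrA.
under eq_bigr => i _ do rewrite -mulr_suml pe.
rewrite /norm1 mulr_sumr -sumrB mulr_sumr -sumrN; apply: ler_sum => i _.
rewrite /c -(real_normK (num_real (g 0 i))) sqr_sg.
have [->|gn0] := eqVneq (g 0 i) 0; first by rewrite normr0 /=; rewrite le_eqVlt; apply/orP; left; apply/eqP; ring.
rewrite /= mulr1.
rewrite le_eqVlt; apply/orP; left; apply/eqP; field; exact: lt0r_neq0.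
Qed.

End Aux.

Theorem corollary6p2 (R : realType) (n : nat) (f : 'rV[R]_n -> R)
    (L alpha eta : R) (x : 'rV[R]_n) (mu : {ffun 'I_n -> bool} -> R) :
  0 < alpha -> 0 < eta ->
  lipschitz_grad L f ->
  (* the event E^t : ||grad f(x^t)||_inf <= eta, with x^t = x *)
  norminf (grad f x) <= eta ->
  mgd_coin_law eta (grad f x) mu ->
  ((L * alpha / 2) * norm1 (grad f x) < (norm2 (grad f x)) ^+ 2 ->
     mgd_expect alpha f x mu < f x) /\
  ((L * alpha * Num.sqrt (n%:R)) / 2 < norm2 (grad f x) ->
     mgd_expect alpha f x mu < f x).
Proof.
move=> a0 e0 Hl Hinf Hmu.
have EB := @expect_bound R n f L alpha eta x mu e0 Hl Hinf Hmu.
set g := grad f x in EB *.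
set S := \sum_i g 0 i ^+ 2 in EB.
have S0 : 0 <= S by apply: sumr_ge0 => i _; exact: sqr_ge0.
have N2S : norm2 g ^+ 2 = S by rewrite /norm2 sqr_sqrtr.
have ae : 0 < alpha / eta by rewrite divr_gt0.
have key : L * alpha / 2 * norm1 g < norm2 g ^+ 2 -> mgd_expect alpha f x mu < f x.
  rewrite N2S => H; apply: (le_lt_trans EB).
  rewrite ltrBlDr ltrDl; apply: mulr_gt0 => //; rewrite subr_gt0.
  by rewrite -!mulrA in H *.
split; first exact: key.
move=> H; apply: key.
have N1le : norm1 g <= Num.sqrt n%:R * norm2 g.
  have := @CS R n (fun i => `|g 0 i|) (fun _ => 1).
  under eq_bigr => i _ do rewrite mulr1.
  under [X in _ <= Num.sqrt X * _ -> _]eq_bigr => i _ do rewrite (real_normK (num_real _)).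
  under [X in _ <= _ * Num.sqrt X -> _]eq_bigr => i _ do rewrite expr1n.
  by rewrite sumr_const card_ord mulrC.
have N10 : 0 <= norm1 g by apply: sumr_ge0 => i _; exact: normr_ge0.
have Ls : 0 <= L * Num.sqrt n%:R.
  case: Hl => _ lip.
  have := lip 0 (const_mx 1).
  have -> : norm2 (0 - const_mx 1 : 'rV[R]_n) = Num.sqrt n%:R.
    rewrite /norm2; congr Num.sqrt.
    under eq_bigr => i _ do rewrite !mxE sub0r sqrrN expr1n.
    by rewrite sumr_const card_ord.
  apply: le_trans; exact: sqrtr_ge0.
have s0 : 0 <= Num.sqrt (n%:R : R) by exact: sqrtr_ge0.
have N20 : 0 <= norm2 g by exact: sqrtr_ge0.
have [L0|L0] := leP 0 L.
  have h1 : 0 <= L * alpha / 2 by apply: divr_ge0 => //; apply: mulr_ge0 => //; exact: ltW.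
  have h2 : L * alpha / 2 * norm1 g <= L * alpha / 2 * (Num.sqrt n%:R * norm2 g).
    exact: ler_wpM2l.
  have N2p : 0 < norm2 g.
    apply: le_lt_trans H; apply: divr_ge0 => //; apply: mulr_ge0 => //.
    by apply: mulr_ge0 => //; exact: ltW.
  apply: (le_lt_trans h2).
  have -> : L * alpha / 2 * (Num.sqrt n%:R * norm2 g) = (L * alpha * Num.sqrt n%:R / 2) * norm2 g.
    by rewrite !mulrA; congr (_ * _); rewrite mulrAC.
  by rewrite expr2 ltr_pM2r.
have sz : Num.sqrt (n%:R : R) = 0 by nra.
have N1z : norm1 g = 0 by apply/le_anti; rewrite N10 andbT; move: N1le; rewrite sz mul0r.
rewrite N1z mulr0 expr2; rewrite sz mulr0 mul0r in H.
exact: mulr_gt0.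
Qed.
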